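(* Let $A\in\mathfrak{H}_n$, $B\in\mathfrak{M}_n$, $N\in\mathbb{N}$. Then \[ \sum_{(k_1,\dots,k_N)\in\{1,\dots,l\}^N}\|M_{k_1,\dots,k_N}\|\le n\,e^{n\|B\|}. \]
   Context: Let $\lambda_1,\dots,\lambda_l$ be the distinct eigenvalues of the Hermitian matrix $A$ and $E_{\lambda_1},\dots,E_{\lambda_l}$ the corresponding orthogonal spectral projectors ($AE_{\lambda_j}=\lambda_jE_{\lambda_j}$, $\sum_j E_{\lambda_j}=I_n$). For $(k_1,\dots,k_N)\in\{1,\dots,l\}^N$, $M_{k_1,\dots,k_N}=E_{\lambda_{k_1}}e^{B/N}E_{\lambda_{k_2}}e^{B/N}\cdots E_{\lambda_{k_N}}e^{B/N}$. $\|\cdot\|$ is the operator norm. *)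

(* Defs.v *)
From Stdlib Require Import Arith Reals List Lra ClassicalEpsilon.
Import ListNotations.
Open Scope R_scope.

Definition C : Type := (R * R)%type.
Definition C0 : C := (0, 0).
Definition C1 : C := (1, 0).
Definition RtoC (r : R) : C := (r, 0).
Definition Cadd (z w : C) : C := (fst z + fst w, snd z + snd w).
Definition Cmul (z w : C) : C :=
  (fst z * fst w - snd z * snd w, fst z * snd w + snd z * fst w).
Definition Cconj (z : C) : C := (fst z, - snd z).
Definition Cnorm2 (z : C) : R := fst z * fst z + snd z * snd z.

Definition Csum (m : nat) (f : nat -> C) : C :=
  fold_right (fun k acc => Cadd (f k) acc) C0 (seq 0 m).
Definition Rsum (m : nat) (f : nat -> R) : R :=
  fold_right (fun k acc => f k + acc) 0 (seq 0 m).

(* ---------- vectors in C^n and n x n matrices (only indices < n matter) ---------- *)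
Definition Vec : Type := nat -> C.
Definition Mat : Type := nat -> nat -> C.

Definition Meq (n : nat) (A B : Mat) : Prop :=
  forall i j, (i < n)%nat -> (j < n)%nat -> A i j = B i j.

Definition Mid : Mat := fun i j => if Nat.eqb i j then C1 else C0.
Definition Mmul (n : nat) (A B : Mat) : Mat :=
  fun i j => Csum n (fun k => Cmul (A i k) (B k j)).
Definition Mscale (c : C) (A : Mat) : Mat := fun i j => Cmul c (A i j).
Definition Madd (A B : Mat) : Mat := fun i j => Cadd (A i j) (B i j).
Definition Msum (m : nat) (F : nat -> Mat) : Mat :=
  fun i j => Csum m (fun k => F k i j).
Definition Madj (A : Mat) : Mat := fun i j => Cconj (A j i).
Fixpoint Mpow (n : nat) (A : Mat) (k : nat) : Mat :=
  match k with
  | O => Mid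
  | S k' => Mmul n A (Mpow n A k')
  end.

Definition hermitian (n : nat) (A : Mat) : Prop := Meq n (Madj A) A.

Definition exp_partial (n : nat) (B : Mat) (m : nat) : Mat :=
  Msum (S m) (fun k => Mscale (RtoC (/ INR (Factorial.fact k))) (Mpow n B k)).

Definition Rlim (u : nat -> R) : R := epsilon (inhabits 0) (fun l => Un_cv u l).

Definition mexp (n : nat) (B : Mat) : Mat :=
  fun i j => (Rlim (fun m => fst (exp_partial n B m i j)),
              Rlim (fun m => snd (exp_partial n B m i j))).

Definition vnorm (n : nat) (x : Vec) : R := sqrt (Rsum n (fun i => Cnorm2 (x i))).
Definition Mapply (n : nat) (A : Mat) (x : Vec) : Vec :=
  fun i => Csum n (fun k => Cmul (A i k) (x k)).

Definition opnorm (n : nat) (A : Mat) : R :=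
  epsilon (inhabits 0)
    (is_lub (fun r => exists x : Vec, vnorm n x <= 1 /\ r = vnorm n (Mapply n A x))).

(* ---------- multi-indices (k_1,...,k_N) in {0,...,l-1}^N and M_{k_1..k_N} ---------- *)
Fixpoint all_tuples (l N : nat) : list (list nat) :=
  match N with
  | O => nil :: nil
  | S N' => flat_map (fun k => map (cons k) (all_tuples l N')) (seq 0 l)
  end.

(* M_{k_1,...,k_N} = E_{k_1} X E_{k_2} X ... E_{k_N} X   with X = e^{B/N} *)
Definition Mword (n : nat) (E : nat -> Mat) (X : Mat) (ks : list nat) : Mat :=
  fold_right (fun k P => Mmul n (Mmul n (E k) X) P) Mid ks.

Definition sum_norms (n l : nat) (E : nat -> Mat) (X : Mat) (N : nat) : R :=
  fold_right (fun ks acc => opnorm n (Mword n E X ks) + acc) 0 (all_tuples l N).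

(* Main.v *)
From Stdlib Require Import Arith Reals List Lra Lia ClassicalEpsilon Ring FunctionalExtensionality.
Require Import Defs.
Import ListNotations.
Open Scope R_scope.

Lemma C_ext (z w : C) : fst z = fst w -> snd z = snd w -> z = w.
Proof. destruct z, w; simpl; intros; subst; auto. Qed.

Definition Copp (z : C) : C := (- fst z, - snd z).
Definition Csub (z w : C) : C := Cadd z (Copp w).

Lemma Cring_theory : ring_theory C0 C1 Cadd Cmul Csub Copp (@eq C).
Proof.
  constructor; intros; apply C_ext; destruct x; try destruct y; try destruct z;
    unfold Cadd, Cmul, Csub, Copp, C0, C1; simpl; ring.
Qed.
Add Ring Cring : Cring_theory.

Lemma Rsum_S m f : Rsum (S m) f = Rsum m f + f m.
Proof.
  unfold Rsum. rewrite seq_S, fold_right_app. simpl.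
  generalize (f m). intro r. induction (seq 0 m) as [|a s IH]; simpl; [ring|].
  rewrite IH. ring.
Qed.
Lemma Csum_S m f : Csum (S m) f = Cadd (Csum m f) (f m).
Proof.
  unfold Csum. rewrite seq_S, fold_right_app. simpl.
  generalize (f m). intro r. induction (seq 0 m) as [|a s IH]; simpl; [ring|].
  rewrite IH. ring.
Qed.
Lemma Rsum_0 f : Rsum 0 f = 0. Proof. reflexivity. Qed.
Lemma Csum_0 f : Csum 0 f = C0. Proof. reflexivity. Qed.

Lemma Rsum_ext m f g : (forall k, (k < m)%nat -> f k = g k) -> Rsum m f = Rsum m g.
Proof.
  induction m; intros H; auto. rewrite !Rsum_S, IHm, H; auto; intros; apply H; lia.
Qed.
Lemma Csum_ext m f g : (forall k, (k < m)%nat -> f k = g k) -> Csum m f = Csum m g.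
Proof.
  induction m; intros H; auto. rewrite !Csum_S, IHm, H; auto; intros; apply H; lia.
Qed.
Lemma Rsum_le m f g : (forall k, (k < m)%nat -> f k <= g k) -> Rsum m f <= Rsum m g.
Proof.
  induction m; intros H. unfold Rsum; simpl; lra. rewrite !Rsum_S.
  assert (Rsum m f <= Rsum m g) by (apply IHm; intros; apply H; lia).
  assert (f m <= g m) by (apply H; lia). lra.
Qed.
Lemma Rsum_plus m f g : Rsum m (fun k => f k + g k) = Rsum m f + Rsum m g.
Proof. induction m. unfold Rsum; simpl; ring. rewrite !Rsum_S, IHm. ring. Qed.
Lemma Rsum_scal m c f : Rsum m (fun k => c * f k) = c * Rsum m f.
Proof. induction m. unfold Rsum; simpl; ring. rewrite !Rsum_S, IHm. ring. Qed.
Lemma Rsum_nonneg m f : (forall k, (k < m)%nat -> 0 <= f k) -> 0 <= Rsum m f.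
Proof. induction m; intros H. unfold Rsum; simpl; lra. rewrite Rsum_S.
  assert (0 <= Rsum m f) by (apply IHm; intros; apply H; lia).
  assert (0 <= f m) by (apply H; lia). lra. Qed.
Lemma Rsum_const m c : Rsum m (fun _ => c) = INR m * c.
Proof. induction m. unfold Rsum; simpl; ring. rewrite Rsum_S, IHm, S_INR. ring. Qed.
Lemma Rsum_swap m p f : Rsum m (fun a => Rsum p (fun b => f a b)) = Rsum p (fun b => Rsum m (fun a => f a b)).
Proof.
  induction m. rewrite Rsum_0. symmetry. rewrite (Rsum_ext p _ (fun _ => 0)). rewrite Rsum_const. ring. intros; apply Rsum_0.
  rewrite Rsum_S, IHm, <- Rsum_plus. apply Rsum_ext. intros. rewrite Rsum_S. auto.
Qed.
Lemma Rsum_single_le m f k : (forall j, (j < m)%nat -> 0 <= f j) -> (k < m)%nat -> f k <= Rsum m f.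
Proof.
  induction m; intros H Hk. lia. rewrite Rsum_S.
  assert (0 <= Rsum m f) by (apply Rsum_nonneg; intros; apply H; lia).
  destruct (Nat.eq_dec k m). subst. lra.
  assert (f k <= Rsum m f) by (apply IHm; intros; [apply H; lia| lia]).
  assert (0 <= f m) by (apply H; lia). lra.
Qed.
Lemma Rsum_two_le m f a b : (forall j, (j < m)%nat -> 0 <= f j) -> (a < m)%nat -> (b < m)%nat -> a <> b -> f a + f b <= Rsum m f.
Proof.
  induction m; intros H Ha Hb Hab. lia. rewrite Rsum_S.
  assert (H0 : forall j, (j < m)%nat -> 0 <= f j) by (intros; apply H; lia).
  destruct (Nat.eq_dec a m). subst.
  assert (f b <= Rsum m f) by (apply Rsum_single_le; auto; lia). lra.
  destruct (Nat.eq_dec b m). subst.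
  assert (f a <= Rsum m f) by (apply Rsum_single_le; auto; lia). lra.
  assert (f a + f b <= Rsum m f) by (apply IHm; auto; lia). assert (0 <= f m) by (apply H; lia). lra.
Qed.
Lemma Rsum_sum_f m f : Rsum (S m) f = sum_f_R0 f m.
Proof. induction m. unfold Rsum; simpl. ring. rewrite Rsum_S, IHm. simpl. ring. Qed.

Lemma Csum_fst m f : fst (Csum m f) = Rsum m (fun k => fst (f k)).
Proof. induction m. auto. rewrite Csum_S, Rsum_S. simpl. rewrite IHm. auto. Qed.
Lemma Csum_snd m f : snd (Csum m f) = Rsum m (fun k => snd (f k)).
Proof. induction m. auto. rewrite Csum_S, Rsum_S. simpl. rewrite IHm. auto. Qed.
Lemma Csum_add m f g : Csum m (fun k => Cadd (f k) (g k)) = Cadd (Csum m f) (Csum m g).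
Proof. induction m. simpl. unfold C0; apply C_ext; simpl; ring. rewrite !Csum_S, IHm. ring. Qed.
Lemma Csum_mul_l m z f : Csum m (fun k => Cmul z (f k)) = Cmul z (Csum m f).
Proof. induction m. apply C_ext; simpl; ring. rewrite !Csum_S, IHm. ring. Qed.
Lemma Csum_mul_r m z f : Csum m (fun k => Cmul (f k) z) = Cmul (Csum m f) z.
Proof. induction m. apply C_ext; simpl; ring. rewrite !Csum_S, IHm. ring. Qed.
Lemma Csum_swap m p f : Csum m (fun a => Csum p (fun b => f a b)) = Csum p (fun b => Csum m (fun a => f a b)).
Proof. apply C_ext.
  - rewrite !Csum_fst. erewrite Rsum_ext; [|intros; apply Csum_fst]. rewrite Rsum_swap.
    apply Rsum_ext; intros; rewrite Csum_fst; auto.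
  - rewrite !Csum_snd. erewrite Rsum_ext; [|intros; apply Csum_snd]. rewrite Rsum_swap.
    apply Rsum_ext; intros; rewrite Csum_snd; auto. Qed.
Lemma Csum_zero m f : (forall k, (k < m)%nat -> f k = C0) -> Csum m f = C0.
Proof. induction m; intros H; auto. rewrite Csum_S, IHm, H; [|lia|intros; apply H; lia].
  apply C_ext; simpl; ring. Qed.
Lemma Csum_conj m f : Cconj (Csum m f) = Csum m (fun k => Cconj (f k)).
Proof. induction m. apply C_ext; simpl; ring. rewrite !Csum_S, <- IHm.
  apply C_ext; simpl; ring. Qed.
Lemma Csum_delta m i f : (i < m)%nat -> Csum m (fun k => if Nat.eqb i k then f k else C0) = f i.
Proof.
  induction m; intros H. lia. rewrite Csum_S. destruct (Nat.eq_dec i m).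
  subst. rewrite Nat.eqb_refl. rewrite Csum_zero. apply C_ext; simpl; ring.
  intros k Hk. destruct (Nat.eqb_spec m k); auto; lia.
  rewrite IHm by lia. destruct (Nat.eqb_spec i m); try lia. apply C_ext; simpl; ring.
Qed.

Definition veq (n : nat) (x y : Vec) := forall i, (i < n)%nat -> x i = y i.
Definition vadd (x y : Vec) : Vec := fun i => Cadd (x i) (y i).
Definition cscale (z : C) (x : Vec) : Vec := fun i => Cmul z (x i).
Definition vsum (m : nat) (F : nat -> Vec) : Vec := fun i => Csum m (fun c => F c i).
Definition ipR n (x y : Vec) := Rsum n (fun i => fst (x i) * fst (y i) + snd (x i) * snd (y i)).
Definition cabs (z : C) := sqrt (Cnorm2 z).

Lemma Cnorm2_nonneg z : 0 <= Cnorm2 z.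
Proof. unfold Cnorm2. apply Rplus_le_le_0_compat; apply Rle_0_sqr. Qed.
Lemma vnorm_nonneg n x : 0 <= vnorm n x.
Proof. apply sqrt_pos. Qed.
Lemma Rsum_Cnorm2_nonneg n x : 0 <= Rsum n (fun i => Cnorm2 (x i)).
Proof. apply Rsum_nonneg; intros; apply Cnorm2_nonneg. Qed.
Lemma vnorm_sq n x : vnorm n x * vnorm n x = Rsum n (fun i => Cnorm2 (x i)).
Proof. apply sqrt_sqrt, Rsum_Cnorm2_nonneg. Qed.
Lemma vnorm_ipR n x : vnorm n x = sqrt (ipR n x x).
Proof. reflexivity. Qed.

Lemma vnorm_veq n x y : veq n x y -> vnorm n x = vnorm n y.
Proof. intros H. unfold vnorm. f_equal. apply Rsum_ext. intros; rewrite H; auto. Qed.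

Lemma CS_quad A B Cc : (forall t, 0 <= A - 2 * t * B + t * t * Cc) -> 0 <= A -> 0 <= Cc ->
  B <= sqrt A * sqrt Cc.
Proof.
  intros H HA HC. assert (0 <= sqrt A * sqrt Cc) by (apply Rmult_le_pos; apply sqrt_pos).
  destruct (Rle_dec B 0). lra.
  destruct (Req_dec Cc 0) as [Hc|Hc].
  - subst. specialize (H ((A + 1) / (2 * B))). exfalso.
    assert (2 * ((A + 1) / (2 * B)) * B = A + 1) by (field; lra). nra.
  - specialize (H (B / Cc)).
    assert (2 * (B / Cc) * B = 2 * (B * B / Cc)) by (field; lra).
    assert (B / Cc * (B / Cc) * Cc = B * B / Cc) by (field; lra).
    assert (B * B <= A * Cc).
    { assert (0 <= A - B * B / Cc) by lra.
      assert (0 <= (A - B * B / Cc) * Cc) by (apply Rmult_le_pos; lra).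
      assert ((A - B * B / Cc) * Cc = A * Cc - B * B) by (field; lra). lra. }
    rewrite <- sqrt_mult by auto. rewrite <- (sqrt_square B) by lra.
    apply sqrt_le_1_alt. auto.
Qed.

Lemma Rsum_quad m f g h t : Rsum m (fun k => f k - 2*t*g k + t*t*h k) = Rsum m f - 2*t*Rsum m g + t*t*Rsum m h.
Proof. induction m. unfold Rsum; simpl; ring. rewrite !Rsum_S, IHm. ring. Qed.

Lemma RCS m a b : Rsum m (fun k => a k * b k) <= sqrt (Rsum m (fun k => a k * a k)) * sqrt (Rsum m (fun k => b k * b k)).
Proof.
  apply CS_quad; try (apply Rsum_nonneg; intros; cbv beta; repeat apply Rplus_le_le_0_compat; apply Rle_0_sqr).
  intros t. apply Rle_trans with (Rsum m (fun k => (a k - t * b k) * (a k - t * b k))).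
  apply Rsum_nonneg; intros; cbv beta; repeat apply Rplus_le_le_0_compat; apply Rle_0_sqr.
  right. rewrite <- Rsum_quad. apply Rsum_ext; intros; ring.
Qed.

Lemma ipR_CS n x y : ipR n x y <= vnorm n x * vnorm n y.
Proof.
  unfold vnorm, ipR, Cnorm2. apply CS_quad; try (apply Rsum_nonneg; intros; cbv beta; repeat apply Rplus_le_le_0_compat; apply Rle_0_sqr).
  intros t. apply Rle_trans with (Rsum n (fun k => (fst (x k) - t * fst (y k)) * (fst (x k) - t * fst (y k)) + (snd (x k) - t * snd (y k)) * (snd (x k) - t * snd (y k)))).
  apply Rsum_nonneg; intros; cbv beta; repeat apply Rplus_le_le_0_compat; apply Rle_0_sqr.
  right. rewrite <- Rsum_quad. apply Rsum_ext; intros; ring.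
Qed.

Lemma vnorm_add n x y : vnorm n (vadd x y) <= vnorm n x + vnorm n y.
Proof.
  assert (Hx := vnorm_nonneg n x). assert (Hy := vnorm_nonneg n y).
  assert (Hs : vnorm n (vadd x y) * vnorm n (vadd x y) = vnorm n x * vnorm n x + 2 * ipR n x y + vnorm n y * vnorm n y).
  { rewrite !vnorm_sq. unfold ipR. rewrite <- Rsum_scal, <- !Rsum_plus. apply Rsum_ext; intros.
    unfold vadd, Cadd, Cnorm2; simpl; ring. }
  assert (ipR n x y <= vnorm n x * vnorm n y) by apply ipR_CS.
  assert (Hz := vnorm_nonneg n (vadd x y)). nra.
Qed.

Lemma vsum_S m F : vsum (S m) F = vadd (vsum m F) (F m).
Proof. unfold vsum, vadd. apply functional_extensionality; intro i. apply (Csum_S m (fun c => F c i)). Qed.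

Lemma vnorm_vsum n m F : vnorm n (vsum m F) <= Rsum m (fun c => vnorm n (F c)).
Proof.
  induction m. unfold vnorm, vsum. rewrite Rsum_0. rewrite (Rsum_ext _ _ (fun _ => 0)).
  rewrite Rsum_const, Rmult_0_r, sqrt_0. lra. intros; unfold Cnorm2; simpl. ring.
  rewrite vsum_S, Rsum_S. eapply Rle_trans. apply vnorm_add. lra.
Qed.

Lemma vnorm_cscale n z x : vnorm n (cscale z x) = cabs z * vnorm n x.
Proof.
  unfold vnorm, cabs. rewrite <- sqrt_mult by (apply Cnorm2_nonneg || apply Rsum_Cnorm2_nonneg).
  f_equal. rewrite <- Rsum_scal. apply Rsum_ext; intros. unfold cscale, Cnorm2, Cmul; simpl; ring.
Qed.

Lemma cabs_RtoC r : cabs (RtoC r) = Rabs r.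
Proof. unfold cabs, Cnorm2, RtoC; simpl. rewrite Rmult_0_r, Rplus_0_r. apply sqrt_Rsqr_abs. Qed.

Lemma cabs_le_vnorm n x k : (k < n)%nat -> cabs (x k) <= vnorm n x.
Proof. intros. unfold cabs, vnorm. apply sqrt_le_1_alt.
  apply (Rsum_single_le n (fun i => Cnorm2 (x i))); auto. intros; apply Cnorm2_nonneg. Qed.

Lemma cabs_nonneg z : 0 <= cabs z. Proof. apply sqrt_pos. Qed.

Lemma Mapply_veq n M x y : veq n x y -> Mapply n M x = Mapply n M y.
Proof. intros H. apply functional_extensionality; intro i. unfold Mapply.
  apply Csum_ext; intros; rewrite H; auto. Qed.

Lemma Mapply_Meq n M M' x : Meq n M M' -> veq n (Mapply n M x) (Mapply n M' x).
Proof. intros H i Hi. unfold Mapply. apply Csum_ext; intros; rewrite H; auto. Qed.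

Lemma Mapply_Mmul n P Q x : Mapply n (Mmul n P Q) x = Mapply n P (Mapply n Q x).
Proof. apply functional_extensionality; intro i. unfold Mapply, Mmul.
  erewrite Csum_ext; [|intros; symmetry; apply Csum_mul_r].
  rewrite Csum_swap. apply Csum_ext; intros. rewrite <- Csum_mul_l.
  apply Csum_ext; intros. ring. Qed.

Lemma Mapply_vsum n M m F : Mapply n M (vsum m F) = vsum m (fun c => Mapply n M (F c)).
Proof. apply functional_extensionality; intro i. unfold Mapply, vsum.
  erewrite Csum_ext; [|intros; symmetry; apply Csum_mul_l].
  rewrite Csum_swap. auto. Qed.

Lemma Mapply_Msum n m F x : Mapply n (Msum m F) x = vsum m (fun c => Mapply n (F c) x).
Proof. apply functional_extensionality; intro i. unfold Mapply, vsum, Msum.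
  erewrite Csum_ext; [|intros; symmetry; apply Csum_mul_r].
  rewrite Csum_swap. auto. Qed.

Lemma Mapply_Mscale n z M x : Mapply n (Mscale z M) x = cscale z (Mapply n M x).
Proof. apply functional_extensionality; intro i. unfold Mapply, cscale, Mscale.
  rewrite <- Csum_mul_l. apply Csum_ext; intros; ring. Qed.

Lemma Mapply_cscale n z M x : Mapply n M (cscale z x) = cscale z (Mapply n M x).
Proof. apply functional_extensionality; intro i. unfold Mapply, cscale.
  rewrite <- Csum_mul_l. apply Csum_ext; intros; ring. Qed.

Lemma Mapply_Mid n x : veq n (Mapply n Mid x) x.
Proof. intros i Hi. unfold Mapply, Mid.
  rewrite <- (Csum_delta n i x Hi). apply Csum_ext; intros.
  destruct (Nat.eqb i k); ring. Qed.

Lemma Mapply_cols n M x : Mapply n M x = vsum n (fun k => cscale (x k) (fun i => M i k)).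
Proof. apply functional_extensionality; intro i. unfold Mapply, vsum, cscale.
  apply Csum_ext; intros; ring. Qed.

Lemma Mapply_bound n M x : vnorm n (Mapply n M x) <= Rsum n (fun k => vnorm n (fun i => M i k)) * vnorm n x.
Proof.
  rewrite Mapply_cols. eapply Rle_trans. apply vnorm_vsum.
  rewrite Rmult_comm, <- Rsum_scal. apply Rsum_le; intros.
  rewrite vnorm_cscale. apply Rmult_le_compat_r. apply vnorm_nonneg. apply cabs_le_vnorm; auto.
Qed.

Definition opset n M := fun r => exists x : Vec, vnorm n x <= 1 /\ r = vnorm n (Mapply n M x).

Lemma opnorm_lub n M : is_lub (opset n M) (opnorm n M).
Proof.
  unfold opnorm. apply epsilon_spec.
  destruct (completeness (opset n M)) as [m Hm].
  - exists (Rsum n (fun k => vnorm n (fun i => M i k))). intros r [x [Hx ->]].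
    eapply Rle_trans. apply Mapply_bound.
    assert (0 <= Rsum n (fun k => vnorm n (fun i => M i k))) by (apply Rsum_nonneg; intros; apply vnorm_nonneg).
    rewrite <- (Rmult_1_r (Rsum _ _)) at 2. apply Rmult_le_compat_l; auto.
  - exists (vnorm n (Mapply n M (fun _ => C0))). exists (fun _ => C0). split; auto.
    unfold vnorm. rewrite (Rsum_ext _ _ (fun _ => 0)). rewrite Rsum_const, Rmult_0_r, sqrt_0. lra.
    intros; unfold Cnorm2; simpl; ring.
  - exists m; auto.
Qed.

Lemma opnorm_nonneg n M : 0 <= opnorm n M.
Proof. destruct (opnorm_lub n M) as [H _]. eapply Rle_trans; [|apply H].
  apply vnorm_nonneg. exists (fun _ => C0). split; auto.
  unfold vnorm. rewrite (Rsum_ext _ _ (fun _ => 0)). rewrite Rsum_const, Rmult_0_r, sqrt_0. lra.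
  intros; unfold Cnorm2; simpl; ring. Qed.

Lemma opnorm_le_of n M c : 0 <= c -> (forall x, vnorm n (Mapply n M x) <= c * vnorm n x) -> opnorm n M <= c.
Proof. intros Hc H. destruct (opnorm_lub n M) as [_ H2]. apply H2.
  intros r [x [Hx ->]]. eapply Rle_trans. apply H. rewrite <- (Rmult_1_r c) at 2.
  apply Rmult_le_compat_l; auto. Qed.

Lemma opnorm_apply n M x : vnorm n (Mapply n M x) <= opnorm n M * vnorm n x.
Proof.
  assert (H0 := vnorm_nonneg n x). destruct (Req_dec (vnorm n x) 0) as [Hz|Hz].
  - assert (H := Mapply_bound n M x). rewrite Hz, Rmult_0_r in *. auto.
  - set (s := / vnorm n x). assert (Hs : 0 < s) by (apply Rinv_0_lt_compat; lra).
    destruct (opnorm_lub n M) as [H _].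
    assert (H1 : vnorm n (Mapply n M (cscale (RtoC s) x)) <= opnorm n M).
    { apply H. exists (cscale (RtoC s) x). split; auto.
      rewrite vnorm_cscale, cabs_RtoC, Rabs_right by lra. unfold s. right. field. auto. }
    rewrite Mapply_cscale, vnorm_cscale, cabs_RtoC, Rabs_right in H1 by lra. unfold s in H1.
    apply Rmult_le_reg_l with (/ vnorm n x). apply Rinv_0_lt_compat; lra.
    replace (/ vnorm n x * (opnorm n M * vnorm n x)) with (opnorm n M) by (field; auto). auto.
Qed.

Definition cip n (x y : Vec) := Csum n (fun i => Cmul (Cconj (x i)) (y i)).

Lemma Cconj_mul a b : Cconj (Cmul a b) = Cmul (Cconj a) (Cconj b).
Proof. apply C_ext; simpl; ring. Qed.

Lemma vnorm_sq_cip n x : vnorm n x * vnorm n x = fst (cip n x x).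
Proof. rewrite vnorm_sq. unfold cip. rewrite Csum_fst. apply Rsum_ext; intros.
  unfold Cnorm2; simpl; ring. Qed.

Lemma cip_veq n x y y' : veq n y y' -> cip n x y = cip n x y'.
Proof. intros H. unfold cip. apply Csum_ext; intros; rewrite H; auto. Qed.

Lemma cip_vsum n x m F : cip n x (vsum m F) = Csum m (fun c => cip n x (F c)).
Proof. unfold cip, vsum. erewrite Csum_ext; [|intros; symmetry; apply Csum_mul_l].
  apply Csum_swap. Qed.

Lemma cip_herm n E x y : Meq n (Madj E) E -> cip n x (Mapply n E y) = cip n (Mapply n E x) y.
Proof.
  intros H. unfold cip, Mapply.
  erewrite Csum_ext; [|intros; symmetry; apply Csum_mul_l].
  symmetry. erewrite Csum_ext; [|intros; rewrite Csum_conj; symmetry; apply Csum_mul_r].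
  rewrite Csum_swap. apply Csum_ext; intros i Hi. apply Csum_ext; intros k Hk.
  rewrite Cconj_mul. rewrite <- (H i k Hi Hk). unfold Madj. ring.
Qed.

Definition projfam n l (E : nat -> Mat) :=
  (forall j, (j < l)%nat -> Meq n (Mmul n (E j) (E j)) (E j)) /\
  (forall j, (j < l)%nat -> Meq n (Madj (E j)) (E j)) /\
  Meq n (Msum l E) Mid.

Lemma E_idem n l E j y : projfam n l E -> (j < l)%nat ->
  veq n (Mapply n (E j) (Mapply n (E j) y)) (Mapply n (E j) y).
Proof. intros [H1 _] Hj. rewrite <- Mapply_Mmul. apply Mapply_Meq; auto. Qed.

Lemma E_resol n l E y : projfam n l E -> veq n (vsum l (fun c => Mapply n (E c) y)) y.
Proof. intros [_ [_ H3]]. rewrite <- Mapply_Msum. intros i Hi.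
  rewrite (Mapply_Meq n _ _ y H3 i Hi). apply Mapply_Mid; auto. Qed.

Lemma E_normsq n l E j y : projfam n l E -> (j < l)%nat ->
  vnorm n (Mapply n (E j) y) * vnorm n (Mapply n (E j) y) = fst (cip n y (Mapply n (E j) y)).
Proof. intros HP Hj. rewrite vnorm_sq_cip. rewrite <- (cip_herm n (E j)); [|destruct HP as [_ [H _]]; auto].
  rewrite (cip_veq _ _ _ _ (E_idem n l E j y HP Hj)). auto. Qed.

Lemma E_sumsq n l E y : projfam n l E ->
  Rsum l (fun c => vnorm n (Mapply n (E c) y) * vnorm n (Mapply n (E c) y)) = vnorm n y * vnorm n y.
Proof. intros HP. rewrite (Rsum_ext _ _ (fun c => fst (cip n y (Mapply n (E c) y)))).
  rewrite <- Csum_fst, <- (cip_vsum n y l (fun c => Mapply n (E c) y)). rewrite (cip_veq _ _ _ _ (E_resol n l E y HP)).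
  rewrite vnorm_sq_cip. auto. intros; apply (E_normsq n l); auto. Qed.

Lemma E_contr n l E j y : projfam n l E -> (j < l)%nat -> vnorm n (Mapply n (E j) y) <= vnorm n y.
Proof. intros HP Hj. assert (H := E_sumsq n l E y HP).
  assert (vnorm n (Mapply n (E j) y) * vnorm n (Mapply n (E j) y) <= vnorm n y * vnorm n y).
  { rewrite <- H. apply (Rsum_single_le l (fun c => vnorm n (Mapply n (E c) y) * vnorm n (Mapply n (E c) y))); auto.
    intros. apply Rle_0_sqr. }
  assert (H1 := vnorm_nonneg n y). assert (H2 := vnorm_nonneg n (Mapply n (E j) y)). nra. Qed.

Lemma E_orth n l E a b y : projfam n l E -> (a < l)%nat -> (b < l)%nat -> a <> b ->
  vnorm n (Mapply n (E b) (Mapply n (E a) y)) = 0.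
Proof. intros HP Ha Hb Hab. set (v := Mapply n (E a) y).
  assert (H := E_sumsq n l E v HP).
  assert (H2 := Rsum_two_le l (fun c => vnorm n (Mapply n (E c) v) * vnorm n (Mapply n (E c) v)) a b
     ltac:(intros; apply Rle_0_sqr) Ha Hb Hab). simpl in H2.
  assert (vnorm n (Mapply n (E a) v) = vnorm n v) by (apply vnorm_veq, E_idem with l; auto).
  rewrite H0 in H2. rewrite H in H2.
  assert (H3 := vnorm_nonneg n (Mapply n (E b) v)). nra. Qed.

Definition ev (m : nat) : Vec := fun p => if Nat.eqb m p then C1 else C0.

Lemma Rsum_delta m i f : (i < m)%nat -> Rsum m (fun k => if Nat.eqb i k then f k else 0) = f i.
Proof.
  induction m; intros H. lia. rewrite Rsum_S. destruct (Nat.eq_dec i m).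
  subst. rewrite Nat.eqb_refl. rewrite (Rsum_ext _ _ (fun _ => 0)). rewrite Rsum_const. ring.
  intros k Hk. destruct (Nat.eqb_spec m k); auto; lia.
  rewrite IHm by lia. destruct (Nat.eqb_spec i m); try lia. ring.
Qed.

Lemma vnorm_ev n m : (m < n)%nat -> vnorm n (ev m) = 1.
Proof. intros H. unfold vnorm. rewrite <- sqrt_1. f_equal.
  rewrite <- (Rsum_delta n m (fun _ => 1)) by auto. apply Rsum_ext; intros.
  unfold ev, Cnorm2. destruct (Nat.eqb m k); simpl; ring. Qed.

Lemma Mapply_ev n M k : (k < n)%nat -> veq n (Mapply n M (ev k)) (fun p => M p k).
Proof. intros Hk p Hp. unfold Mapply, ev.
  rewrite <- (Csum_delta n k (fun m => M p m) Hk). apply Csum_ext; intros.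
  destruct (Nat.eqb k k0); apply C_ext; simpl; ring. Qed.

Lemma Cnorm2_pos z : z <> C0 -> 0 < Cnorm2 z.
Proof. destruct z as [a b]. intros H. unfold Cnorm2; simpl.
  assert (0 <= a*a) by apply Rle_0_sqr. assert (0 <= b*b) by apply Rle_0_sqr.
  destruct (Req_dec a 0). destruct (Req_dec b 0). subst. exfalso; apply H; auto.
  assert (0 < b*b) by (apply Rsqr_pos_lt; auto). lra.
  assert (0 < a*a) by (apply Rsqr_pos_lt; auto). lra. Qed.

Lemma tr_ge1 n l E j i k : projfam n l E -> (j < l)%nat -> (i < n)%nat -> (k < n)%nat -> E j i k <> C0 ->
  1 <= Rsum n (fun m => vnorm n (Mapply n (E j) (ev m)) * vnorm n (Mapply n (E j) (ev m))).
Proof.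
  intros HP Hj Hi Hk Hnz. set (v := Mapply n (E j) (ev k)).
  assert (Hvpos : 0 < vnorm n v).
  { unfold vnorm. apply sqrt_lt_R0. eapply Rlt_le_trans; [|apply (Rsum_single_le n (fun p => Cnorm2 (v p)) i)].
    - unfold v. rewrite (Mapply_ev n (E j) k Hk i Hi). apply Cnorm2_pos; auto.
    - intros; apply Cnorm2_nonneg.
    - auto. }
  set (T := Rsum n (fun m => vnorm n (Mapply n (E j) (ev m)) * vnorm n (Mapply n (E j) (ev m)))).
  assert (HT : 0 <= T) by (apply Rsum_nonneg; intros; apply Rle_0_sqr).
  assert (H1 : vnorm n v <= vnorm n v * sqrt T).
  { assert (Hev : vnorm n v = vnorm n (Mapply n (E j) v)) by (symmetry; apply vnorm_veq; unfold v; apply E_idem with l; auto).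
    rewrite Hev at 1. rewrite Mapply_cols. eapply Rle_trans. apply vnorm_vsum.
    rewrite (Rsum_ext _ _ (fun m => cabs (v m) * vnorm n (Mapply n (E j) (ev m)))).
    eapply Rle_trans. apply RCS. right. f_equal.
    unfold vnorm. f_equal. apply Rsum_ext; intros. unfold cabs. apply sqrt_sqrt, Cnorm2_nonneg.
    intros m Hm. rewrite vnorm_cscale. f_equal. symmetry. apply vnorm_veq. apply Mapply_ev; auto. }
  assert (1 <= sqrt T).
  { apply Rmult_le_reg_l with (vnorm n v); auto. lra. }
  rewrite <- (sqrt_sqrt T) by auto. nra.
Qed.

Lemma l_le_n n l E : projfam n l E ->
  (forall j, (j < l)%nat -> exists i k, (i < n)%nat /\ (k < n)%nat /\ E j i k <> C0) -> (l <= n)%nat.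
Proof.
  intros HP Hnz. apply INR_le.
  rewrite <- (Rmult_1_r (INR l)), <- Rsum_const.
  apply Rle_trans with (Rsum l (fun j => Rsum n (fun m => vnorm n (Mapply n (E j) (ev m)) * vnorm n (Mapply n (E j) (ev m))))).
  apply Rsum_le; intros j Hj. destruct (Hnz j Hj) as [i [k [Hi [Hk Hne]]]]. apply (tr_ge1 n l E j i k); auto.
  rewrite (Rsum_swap l n (fun j m => vnorm n (Mapply n (E j) (ev m)) * vnorm n (Mapply n (E j) (ev m)))). right.
  rewrite <- (Rmult_1_r (INR n)), <- (Rsum_const n 1).
  apply Rsum_ext; intros m Hm. rewrite (E_sumsq n l E (ev m) HP). rewrite vnorm_ev; auto. ring.
Qed.

Lemma pow_bound n Y k v : vnorm n (Mapply n (Mpow n Y k) v) <= opnorm n Y ^ k * vnorm n v.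
Proof.
  induction k. simpl. rewrite (vnorm_veq _ _ _ (Mapply_Mid n v)). lra.
  simpl Mpow. rewrite Mapply_Mmul. eapply Rle_trans. apply opnorm_apply.
  simpl. rewrite Rmult_assoc. apply Rmult_le_compat_l. apply opnorm_nonneg. auto.
Qed.

Lemma block_pow n l E Y a b k y : projfam n l E -> (a < l)%nat -> (b < l)%nat ->
  vnorm n (Mapply n (E a) (Mapply n (Mpow n Y (S k)) (Mapply n (E b) y)))
   <= opnorm n Y ^ (S k) * INR l ^ k * vnorm n y.
Proof.
  intros HP. revert a. induction k; intros a Ha Hb.
  - simpl Mpow. rewrite Mapply_Mmul. rewrite (Mapply_veq _ _ _ _ (Mapply_Mid n _)).
    eapply Rle_trans. apply (E_contr n l); auto. eapply Rle_trans. apply opnorm_apply.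
    simpl. rewrite !Rmult_1_r. apply Rmult_le_compat_l. apply opnorm_nonneg. apply (E_contr n l); auto.
  - set (u := Mapply n (Mpow n Y (S k)) (Mapply n (E b) y)).
    change (Mpow n Y (S (S k))) with (Mmul n Y (Mpow n Y (S k))).
    rewrite Mapply_Mmul. fold u.
    assert (Hu : veq n u (vsum l (fun c => Mapply n (E c) u))).
    { intros i Hi. symmetry. apply (E_resol n l E u HP); auto. }
    rewrite (Mapply_veq _ _ _ _ Hu), !Mapply_vsum.
    eapply Rle_trans. apply vnorm_vsum.
    apply Rle_trans with (Rsum l (fun c => opnorm n Y * (opnorm n Y ^ S k * INR l ^ k * vnorm n y))).
    + apply Rsum_le; intros c Hc. eapply Rle_trans. apply (E_contr n l); auto.
      eapply Rle_trans. apply opnorm_apply. apply Rmult_le_compat_l. apply opnorm_nonneg. apply IHk; auto.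
    + rewrite Rsum_const. right. simpl. ring.
Qed.

Lemma Mapply_partial n Y m v : Mapply n (exp_partial n Y m) v =
  vsum (S m) (fun j => cscale (RtoC (/ INR (Factorial.fact j))) (Mapply n (Mpow n Y j) v)).
Proof. unfold exp_partial. rewrite Mapply_Msum. f_equal. apply functional_extensionality; intro j.
  apply Mapply_Mscale. Qed.

Lemma exp_series x : Un_cv (fun m => sum_f_R0 (fun i => / INR (Factorial.fact i) * x ^ i) m) (exp x).
Proof. unfold exp. destruct (exist_exp x) as [l Hl]. simpl. exact Hl. Qed.

Lemma partial_exp_le x m : 0 <= x -> Rsum (S m) (fun i => / INR (Factorial.fact i) * x ^ i) <= exp x.
Proof. intros Hx. rewrite Rsum_sum_f. apply sum_incr. apply exp_series.
  intros. apply Rmult_le_pos. left; apply Rinv_0_lt_compat, INR_fact_lt_0. apply pow_le; auto. Qed.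

Lemma cabs_inv_fact j : cabs (RtoC (/ INR (Factorial.fact j))) = / INR (Factorial.fact j).
Proof. rewrite cabs_RtoC. apply Rabs_pos_eq. left; apply Rinv_0_lt_compat, INR_fact_lt_0. Qed.

Lemma partial_bound n Y m v : vnorm n (Mapply n (exp_partial n Y m) v) <= exp (opnorm n Y) * vnorm n v.
Proof.
  rewrite Mapply_partial. eapply Rle_trans. apply vnorm_vsum.
  apply Rle_trans with (Rsum (S m) (fun j => / INR (Factorial.fact j) * opnorm n Y ^ j) * vnorm n v).
  - rewrite Rmult_comm, <- Rsum_scal. apply Rsum_le; intros j Hj.
    rewrite vnorm_cscale, cabs_inv_fact. rewrite (Rmult_comm (vnorm n v)), Rmult_assoc.
    apply Rmult_le_compat_l. left; apply Rinv_0_lt_compat, INR_fact_lt_0. apply pow_bound.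
  - apply Rmult_le_compat_r. apply vnorm_nonneg. apply partial_exp_le, opnorm_nonneg.
Qed.

Definition dlt (a b : nat) : R := if Nat.eqb a b then 1 else 0.

Lemma block_zero n l E a b y : projfam n l E -> (a < l)%nat -> (b < l)%nat ->
  vnorm n (Mapply n (E a) (Mapply n (E b) y)) <= dlt a b * vnorm n y.
Proof.
  intros HP Ha Hb. unfold dlt. destruct (Nat.eqb_spec a b).
  - subst. rewrite Rmult_1_l. eapply Rle_trans; apply (E_contr n l); auto.
  - rewrite (E_orth n l E b a y HP Hb Ha); auto. rewrite Rmult_0_l. lra.
Qed.

Lemma partial_block n l E Y m a b y : projfam n l E -> (a < l)%nat -> (b < l)%nat ->
  vnorm n (Mapply n (E a) (Mapply n (exp_partial n Y m) (Mapply n (E b) y)))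
  <= (dlt a b + (exp (INR l * opnorm n Y) - 1) / INR l) * vnorm n y.
Proof.
  intros HP Ha Hb. assert (Hl : 0 < INR l) by (apply lt_0_INR; lia).
  set (be := opnorm n Y). assert (Hbe : 0 <= be) by apply opnorm_nonneg.
  rewrite Mapply_partial, Mapply_vsum. eapply Rle_trans. apply vnorm_vsum.
  apply Rle_trans with (Rsum (S m) (fun j => ((if Nat.eqb 0 j then dlt a b - / INR l else 0)
       + / INR (Factorial.fact j) * (INR l * be) ^ j / INR l) * vnorm n y)).
  - apply Rsum_le; intros j Hj. rewrite Mapply_cscale, vnorm_cscale, cabs_inv_fact.
    destruct j.
    + simpl. rewrite (Mapply_veq _ _ _ _ (Mapply_Mid n _)).
      assert (H := block_zero n l E a b y HP Ha Hb).
      replace ((dlt a b - / INR l + / 1 * 1 / INR l) * vnorm n y) with (dlt a b * vnorm n y) by (field; lra).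
      rewrite Rinv_1, Rmult_1_l. auto.
    + simpl (Nat.eqb 0 (S j)). rewrite Rplus_0_l.
      assert (H := block_pow n l E Y a b j y HP Ha Hb).
      assert (Hf : 0 < / INR (Factorial.fact (S j))) by (apply Rinv_0_lt_compat, INR_fact_lt_0).
      apply Rle_trans with (/ INR (Factorial.fact (S j)) * (be ^ S j * INR l ^ j * vnorm n y)).
      apply Rmult_le_compat_l. lra. exact H.
      right. rewrite Rpow_mult_distr. replace (INR l ^ S j) with (INR l * INR l ^ j) by (simpl; ring). field. split; [apply INR_fact_neq_0|lra].
  - rewrite (Rsum_ext _ _ (fun j => vnorm n y * ((if Nat.eqb 0 j then dlt a b - / INR l else 0)
       + / INR l * (/ INR (Factorial.fact j) * (INR l * be) ^ j)))).
    rewrite Rsum_scal, Rsum_plus, Rsum_scal, Rsum_delta by lia.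
    rewrite Rmult_comm. apply Rmult_le_compat_r. apply vnorm_nonneg.
    assert (Rsum (S m) (fun j => / INR (Factorial.fact j) * (INR l * be) ^ j) <= exp (INR l * be)).
    apply partial_exp_le. apply Rmult_le_pos; lra.
    assert (0 < / INR l) by (apply Rinv_0_lt_compat; lra).
    unfold Rdiv. apply Rle_trans with (dlt a b - / INR l + / INR l * exp (INR l * be)).
    apply Rplus_le_compat_l. apply Rmult_le_compat_l; lra. right; field; lra.
    intros j Hj. unfold Rdiv. ring.
Qed.

Lemma cv_const c : Un_cv (fun _ => c) c.
Proof. intros eps He. exists 0%nat. intros. unfold R_dist. rewrite Rminus_diag, Rabs_R0. auto. Qed.

Lemma cv_Rsum p f L : (forall k, (k < p)%nat -> Un_cv (f k) (L k)) ->
  Un_cv (fun m => Rsum p (fun k => f k m)) (Rsum p L).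
Proof.
  induction p; intros H. unfold Rsum; simpl. apply cv_const.
  rewrite Rsum_S. apply (Un_cv_ext (fun m => Rsum p (fun k => f k m) + f p m)).
  intros; rewrite Rsum_S; auto.
  apply CV_plus. apply IHp; intros; apply H; lia. apply H; lia.
Qed.

Definition cvv n (u : nat -> Vec) (v : Vec) := forall i, (i < n)%nat ->
  Un_cv (fun m => fst (u m i)) (fst (v i)) /\ Un_cv (fun m => snd (u m i)) (snd (v i)).

Lemma cvv_const n v : cvv n (fun _ => v) v.
Proof. split; apply cv_const. Qed.

Lemma cvv_apply n (M : nat -> Mat) M0 u v :
  (forall i k, (i < n)%nat -> (k < n)%nat ->
     Un_cv (fun m => fst (M m i k)) (fst (M0 i k)) /\ Un_cv (fun m => snd (M m i k)) (snd (M0 i k))) ->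
  cvv n u v -> cvv n (fun m => Mapply n (M m) (u m)) (Mapply n M0 v).
Proof.
  intros HM Hu i Hi. unfold Mapply. rewrite !Csum_fst, !Csum_snd. split.
  - apply (Un_cv_ext (fun m => Rsum n (fun k => (fun k m => fst (Cmul (M m i k) (u m k))) k m))).
    intros; rewrite Csum_fst; auto.
    apply cv_Rsum. intros k Hk. simpl. destruct (HM i k Hi Hk), (Hu k Hk).
    apply CV_minus; apply CV_mult; auto.
  - apply (Un_cv_ext (fun m => Rsum n (fun k => (fun k m => snd (Cmul (M m i k) (u m k))) k m))).
    intros; rewrite Csum_snd; auto.
    apply cv_Rsum. intros k Hk. simpl. destruct (HM i k Hi Hk), (Hu k Hk).
    apply CV_plus; apply CV_mult; auto.
Qed.

Lemma cvv_vnorm n u v : cvv n u v -> Un_cv (fun m => vnorm n (u m)) (vnorm n v).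
Proof.
  intros H. unfold vnorm. apply (continuity_seq sqrt (fun m => Rsum n (fun i => Cnorm2 (u m i)))).
  apply continuity_pt_sqrt, Rsum_Cnorm2_nonneg.
  apply (cv_Rsum n (fun i m => Cnorm2 (u m i))). intros i Hi. destruct (H i Hi).
  unfold Cnorm2. apply CV_plus; apply CV_mult; auto.
Qed.

Lemma cv_le u L c : Un_cv u L -> (forall m, u m <= c) -> L <= c.
Proof. intros H Hc. eapply Rle_cv_lim; [exact Hc|exact H|apply cv_const]. Qed.

Lemma series_abs_cv (a c : nat -> R) L : (forall j, Rabs (a j) <= c j) ->
  Un_cv (fun m => sum_f_R0 c m) L -> exists l, Un_cv (fun m => sum_f_R0 a m) l.
Proof.
  intros Hac HL.
  destruct (Rseries_CV_comp (fun j => a j + c j) (fun j => 2 * c j)) as [l1 Hl1].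
  - intros j. specialize (Hac j). split. assert (- c j <= a j) by (apply Rabs_def2b || (unfold Rabs in Hac; destruct (Rcase_abs (a j)); lra)). lra.
    assert (a j <= c j) by (eapply Rle_trans; [apply Rle_abs|exact Hac]). lra.
  - exists (2 * L). apply (Un_cv_ext (fun m => 2 * sum_f_R0 c m)).
    intros m. rewrite scal_sum. apply sum_eq; intros; ring.
    apply CV_mult. apply cv_const. auto.
  - exists (l1 - L). apply (Un_cv_ext (fun m => sum_f_R0 (fun j => a j + c j) m - sum_f_R0 c m)).
    intros m. rewrite <- minus_sum. apply sum_eq; intros; ring.
    apply CV_minus; auto.
Qed.

Lemma Rlim_spec u : (exists l, Un_cv u l) -> Un_cv u (Rlim u).
Proof. intros H. unfold Rlim. apply epsilon_spec. auto. Qed.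

Lemma entry_le n M i k : (i < n)%nat -> (k < n)%nat -> cabs (M i k) <= vnorm n (Mapply n M (ev k)).
Proof. intros Hi Hk. rewrite (vnorm_veq _ _ _ (Mapply_ev n M k Hk)).
  apply (cabs_le_vnorm n (fun p => M p k) i Hi). Qed.

Lemma fst_le_cabs z : Rabs (fst z) <= cabs z.
Proof. unfold cabs, Cnorm2. rewrite <- sqrt_Rsqr_abs. apply sqrt_le_1_alt.
  unfold Rsqr. assert (0 <= snd z * snd z) by apply Rle_0_sqr. lra. Qed.
Lemma snd_le_cabs z : Rabs (snd z) <= cabs z.
Proof. unfold cabs, Cnorm2. rewrite <- sqrt_Rsqr_abs. apply sqrt_le_1_alt.
  unfold Rsqr. assert (0 <= fst z * fst z) by apply Rle_0_sqr. lra. Qed.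

Lemma mexp_cv n Y i k : (i < n)%nat -> (k < n)%nat ->
  Un_cv (fun m => fst (exp_partial n Y m i k)) (fst (mexp n Y i k)) /\
  Un_cv (fun m => snd (exp_partial n Y m i k)) (snd (mexp n Y i k)).
Proof.
  intros Hi Hk. set (be := opnorm n Y).
  assert (Hpow : forall j, cabs (Mpow n Y j i k) <= be ^ j).
  { intros j. apply Rle_trans with (vnorm n (Mapply n (Mpow n Y j) (ev k))). apply entry_le; auto.
    eapply Rle_trans. apply pow_bound.
    rewrite vnorm_ev; auto. rewrite Rmult_1_r; apply Rle_refl. }
  assert (Hf : forall j, 0 < / INR (Factorial.fact j)) by (intros; apply Rinv_0_lt_compat, INR_fact_lt_0).
  split; unfold mexp; cbn [fst snd]; apply Rlim_spec.
  - destruct (series_abs_cv (fun j => / INR (Factorial.fact j) * fst (Mpow n Y j i k))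
       (fun j => / INR (Factorial.fact j) * be ^ j) (exp be)) as [L HL].
    + intros j. rewrite Rabs_mult, Rabs_pos_eq by (left; auto). apply Rmult_le_compat_l. left; auto.
      eapply Rle_trans. apply fst_le_cabs. auto.
    + apply exp_series.
    + exists L. apply (Un_cv_ext (fun m => sum_f_R0 (fun j => / INR (Factorial.fact j) * fst (Mpow n Y j i k)) m)); auto.
      intros m. unfold exp_partial, Msum; cbv beta. rewrite Csum_fst, Rsum_sum_f. apply sum_eq; intros.
      unfold Mscale, RtoC; simpl. ring.
  - destruct (series_abs_cv (fun j => / INR (Factorial.fact j) * snd (Mpow n Y j i k))
       (fun j => / INR (Factorial.fact j) * be ^ j) (exp be)) as [L HL].
    + intros j. rewrite Rabs_mult, Rabs_pos_eq by (left; auto). apply Rmult_le_compat_l. left; auto.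
      eapply Rle_trans. apply snd_le_cabs. auto.
    + apply exp_series.
    + exists L. apply (Un_cv_ext (fun m => sum_f_R0 (fun j => / INR (Factorial.fact j) * snd (Mpow n Y j i k)) m)); auto.
      intros m. unfold exp_partial, Msum; cbv beta. rewrite Csum_snd, Rsum_sum_f. apply sum_eq; intros.
      unfold Mscale, RtoC; simpl. ring.
Qed.

Lemma X_bound n Y y : vnorm n (Mapply n (mexp n Y) y) <= exp (opnorm n Y) * vnorm n y.
Proof.
  apply (cv_le (fun m => vnorm n (Mapply n (exp_partial n Y m) y))).
  apply cvv_vnorm. apply (cvv_apply n (fun m => exp_partial n Y m) (mexp n Y) (fun _ => y) y).
  intros; apply mexp_cv; auto. apply cvv_const.
  intros m. apply partial_bound.
Qed.

Lemma X_block n l E Y a b y : projfam n l E -> (a < l)%nat -> (b < l)%nat ->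
  vnorm n (Mapply n (E a) (Mapply n (mexp n Y) (Mapply n (E b) y)))
  <= (dlt a b + (exp (INR l * opnorm n Y) - 1) / INR l) * vnorm n y.
Proof.
  intros HP Ha Hb.
  apply (cv_le (fun m => vnorm n (Mapply n (E a) (Mapply n (exp_partial n Y m) (Mapply n (E b) y))))).
  apply cvv_vnorm. apply (cvv_apply n (fun _ => E a) (E a)).
  intros; split; apply cv_const.
  apply (cvv_apply n (fun m => exp_partial n Y m) (mexp n Y) (fun _ => _)).
  intros; apply mexp_cv; auto. apply cvv_const.
  intros m. apply partial_block; auto.
Qed.

Fixpoint wgt (q : nat -> nat -> R) (g : R) (a : nat) (ks : list nat) : R :=
  match ks with [] => g | b :: r => q a b * wgt q g b r end.

Lemma wgt_nonneg q g a ks : 0 <= g -> (forall a b, 0 <= q a b) -> 0 <= wgt q g a ks.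
Proof. intros Hg Hq. revert a; induction ks; intros; simpl; auto. apply Rmult_le_pos; auto. Qed.

Lemma word_bound n l E X q g : projfam n l E -> 0 <= g -> (forall a b, 0 <= q a b) ->
  (forall y, vnorm n (Mapply n X y) <= g * vnorm n y) ->
  (forall a b y, (a < l)%nat -> (b < l)%nat ->
      vnorm n (Mapply n (E a) (Mapply n X (Mapply n (E b) y))) <= q a b * vnorm n y) ->
  forall ks a x, Forall (fun k => (k < l)%nat) (a :: ks) ->
  vnorm n (Mapply n (Mword n E X (a :: ks)) x) <= wgt q g a ks * vnorm n x.
Proof.
  intros HP Hg Hq HX Hblk. induction ks as [|b r IH]; intros a x HF.
  - simpl. rewrite !Mapply_Mmul. inversion HF; subst.
    eapply Rle_trans. apply (E_contr n l); auto. eapply Rle_trans. apply HX.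
    rewrite (vnorm_veq _ _ _ (Mapply_Mid n x)). lra.
  - inversion HF; subst. inversion H2; subst.
    set (W := Mapply n (Mword n E X (b :: r)) x).
    change (Mword n E X (a :: b :: r)) with (Mmul n (Mmul n (E a) X) (Mword n E X (b :: r))).
    rewrite !Mapply_Mmul. fold W.
    assert (HW : veq n W (Mapply n (E b) W)).
    { intros i Hi. symmetry. unfold W. simpl Mword. rewrite !Mapply_Mmul.
      apply (E_idem n l E b); auto. }
    rewrite (Mapply_veq _ _ _ _ HW). eapply Rle_trans. apply Hblk; auto.
    simpl wgt. rewrite Rmult_assoc. apply Rmult_le_compat_l; auto. apply IH; auto.
Qed.

Definition LT {A} (f : A -> R) (L : list A) := fold_right (fun x acc => f x + acc) 0 L.

Lemma LT_app {A} (f : A -> R) L1 L2 : LT f (L1 ++ L2) = LT f L1 + LT f L2.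
Proof. induction L1; simpl. ring. unfold LT in *; simpl. rewrite IHL1. ring. Qed.
Lemma LT_flat_map {A B} (f : B -> R) (G : A -> list B) s : LT f (flat_map G s) = LT (fun a => LT f (G a)) s.
Proof. induction s; simpl. auto. rewrite LT_app, IHs. auto. Qed.
Lemma LT_map {A B} (f : B -> R) (h : A -> B) L : LT f (map h L) = LT (fun x => f (h x)) L.
Proof. induction L; simpl; auto. unfold LT in *; simpl; rewrite IHL; auto. Qed.
Lemma LT_le {A} (f g : A -> R) L : (forall x, In x L -> f x <= g x) -> LT f L <= LT g L.
Proof. induction L; intros H; simpl. unfold LT; simpl; lra. unfold LT in *; simpl.
  assert (f a <= g a) by (apply H; left; auto). assert (fold_right (fun x acc => f x + acc) 0 L <= fold_right (fun x acc => g x + acc) 0 L) by (apply IHL; intros; apply H; right; auto). lra. Qed.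
Lemma LT_scal {A} c (f : A -> R) L : LT (fun x => c * f x) L = c * LT f L.
Proof. induction L; unfold LT in *; simpl. ring. rewrite IHL. ring. Qed.

Lemma all_tuples_in l m ks : In ks (all_tuples l m) -> Forall (fun k => (k < l)%nat) ks.
Proof.
  revert ks; induction m; intros ks H; simpl in H.
  - destruct H as [<-|[]]. constructor.
  - apply in_flat_map in H. destruct H as [a [Ha H]]. apply in_map_iff in H.
    destruct H as [r [<- Hr]]. apply in_seq in Ha. constructor. lia. auto.
Qed.

Lemma G_value l q g c m a : (0 < l)%nat -> (forall a b, q a b = dlt a b + c) -> (a < l)%nat ->
  LT (wgt q g a) (all_tuples l m) = g * (1 + INR l * c) ^ m.
Proof.
  intros Hl Hq. revert a; induction m; intros a Ha.
  - unfold LT; simpl. ring.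
  - simpl all_tuples. rewrite LT_flat_map.
    change (LT (fun b => LT (wgt q g a) (map (cons b) (all_tuples l m))) (seq 0 l))
      with (Rsum l (fun b => LT (wgt q g a) (map (cons b) (all_tuples l m)))).
    rewrite (Rsum_ext _ _ (fun b => (if Nat.eqb a b then g * (1 + INR l * c) ^ m else 0) + c * (g * (1 + INR l * c) ^ m))).
    rewrite Rsum_plus, Rsum_delta, Rsum_const by auto. simpl. ring.
    intros b Hb. rewrite LT_map. simpl wgt. rewrite LT_scal, IHm, Hq by auto. unfold dlt. destruct (Nat.eqb a b); ring.
Qed.

Lemma exp_pow x k : exp x ^ k = exp (INR k * x).
Proof. induction k. simpl. rewrite Rmult_0_l, exp_0. auto.
  rewrite S_INR. simpl. rewrite IHk, <- exp_plus. f_equal. ring. Qed.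

Lemma exp_le x y : x <= y -> exp x <= exp y.
Proof. intros [H|H]. left; apply exp_increasing; auto. subst; lra. Qed.

Theorem lemma6p1 (n : nat) (A B : Mat) (N : nat) (l : nat)
  (lam : nat -> R) (E : nat -> Mat)
  (hA : hermitian n A)
  (hN : (1 <= N)%nat)
  (hdist : forall j k, (j < l)%nat -> (k < l)%nat -> j <> k -> lam j <> lam k)
  (hproj : forall j, (j < l)%nat -> Meq n (Mmul n (E j) (E j)) (E j))
  (hself : forall j, (j < l)%nat -> Meq n (Madj (E j)) (E j))
  (hnz : forall j, (j < l)%nat -> exists i k, (i < n)%nat /\ (k < n)%nat /\ E j i k <> C0)
  (heig : forall j, (j < l)%nat -> Meq n (Mmul n A (E j)) (Mscale (RtoC (lam j)) (E j)))
  (hsum : Meq n (Msum l E) Mid) :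
  sum_norms n l E (mexp n (Mscale (RtoC (/ INR N)) B)) N
    <= INR n * exp (INR n * opnorm n B).
Proof.
  assert (HP : projfam n l E) by (split; [|split]; auto).
  assert (Hln : (l <= n)%nat) by (apply (l_le_n n l E); auto).
  set (Y := Mscale (RtoC (/ INR N)) B). set (X := mexp n Y).
  set (bb := opnorm n B). set (be := opnorm n Y).
  assert (Hbb : 0 <= bb) by apply opnorm_nonneg.
  assert (Hbe : 0 <= be) by apply opnorm_nonneg.
  assert (HN : 0 < INR N) by (apply lt_0_INR; lia).
  assert (Hbe2 : be * INR N <= bb).
  { assert (be <= / INR N * bb).
    { apply opnorm_le_of. apply Rmult_le_pos; [left; apply Rinv_0_lt_compat; auto|auto].
      intros x. unfold Y. rewrite Mapply_Mscale, vnorm_cscale, cabs_RtoC, Rabs_pos_eq by (left; apply Rinv_0_lt_compat; auto).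
      rewrite Rmult_assoc. apply Rmult_le_compat_l. left; apply Rinv_0_lt_compat; auto. apply opnorm_apply. }
    apply Rmult_le_reg_r with (/ INR N). apply Rinv_0_lt_compat; auto.
    replace (be * INR N * / INR N) with be by (field; lra). lra. }
  assert (Hn0 : 0 <= INR n) by apply pos_INR.
  assert (HR : 0 <= INR n * exp (INR n * bb)) by (apply Rmult_le_pos; auto; left; apply exp_pos).
  destruct N as [|N']; [lia|].
  destruct l as [|l'].
  { unfold sum_norms. simpl. fold bb. lra. }
  set (l := S l') in *.
  assert (Hl : 0 < INR l) by (apply lt_0_INR; lia).
  set (c := (exp (INR l * be) - 1) / INR l).
  assert (Hc : 0 <= c).
  { unfold c. apply Rmult_le_pos; [|left; apply Rinv_0_lt_compat; auto].
    assert (H := exp_ineq1_le (INR l * be)). assert (0 <= INR l * be) by (apply Rmult_le_pos; lra). lra. }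
  set (q := fun a b => dlt a b + c).
  assert (Hq : forall a b, 0 <= q a b).
  { intros. unfold q, dlt. destruct (Nat.eqb a b); lra. }
  set (g := exp be).
  assert (Hg : 0 <= g) by (left; apply exp_pos).
  assert (Hword := word_bound n l E X q g HP Hg Hq (X_bound n Y)
     (fun a b y Ha Hb => X_block n l E Y a b y HP Ha Hb)).
  unfold sum_norms. change (fold_right (fun ks acc => opnorm n (Mword n E X ks) + acc) 0 (all_tuples l (S N')))
    with (LT (fun ks => opnorm n (Mword n E X ks)) (all_tuples l (S N'))).
  change (all_tuples l (S N')) with (flat_map (fun k => map (cons k) (all_tuples l N')) (seq 0 l)). rewrite LT_flat_map.
  change (LT (fun a => LT (fun ks => opnorm n (Mword n E X ks)) (map (cons a) (all_tuples l N'))) (seq 0 l))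
    with (Rsum l (fun a => LT (fun ks => opnorm n (Mword n E X ks)) (map (cons a) (all_tuples l N')))).
  apply Rle_trans with (Rsum l (fun a => g * (1 + INR l * c) ^ N')).
  { apply Rsum_le; intros a Ha. rewrite LT_map. rewrite <- (G_value l q g c N' a); auto; [|lia].
    apply LT_le. intros r Hr. apply opnorm_le_of. apply wgt_nonneg; auto.
    intros x. apply Hword. constructor; auto. apply (all_tuples_in l N'); auto. }
  rewrite Rsum_const.
  replace (1 + INR l * c) with (exp (INR l * be)) by (unfold c; field; lra).
  rewrite exp_pow. unfold g. rewrite <- exp_plus.
  assert (HlnR : INR l <= INR n) by (apply le_INR; auto).
  apply Rmult_le_compat; auto. left; auto. left; apply exp_pos.
  apply exp_le. rewrite S_INR in *.
  assert (1 <= INR l) by (apply (le_INR 1); unfold l; lia). assert (1 <= INR n) by lra.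
  assert (INR N' * (INR l * be) <= INR N' * (INR n * be)) by (apply Rmult_le_compat_l; [apply pos_INR| apply Rmult_le_compat_r; lra]).
  assert (be <= INR n * be) by nra.
  assert (INR n * (be * (INR N' + 1)) <= INR n * bb) by (apply Rmult_le_compat_l; lra).
  nra.
Qed.
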